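(* Let $n\in\{2,3,\ldots\}$ and $p\in(0,1)$, let $K$ be the Erdős–Rényi random graph on vertex set $\{1,\ldots,n\}$ with edge probability $p$, and let $Y$ be the number of isolated vertices of $K$, with mean $\mu=n(1-p)^{n-1}$ and variance $\sigma^2=n(1-p)^{n-1}\big(1+np(1-p)^{n-2}-(1-p)^{n-2}\big)$. Let $M(\theta)=E\exp(\theta(Y-\mu)/\sigma)$. Define, for real $s$, $$\gamma_s=e^s(pe^s+1-p)^{n-2}(npe^s+1-p)+(n-1)p+1,\qquad H(\theta)=\frac{\mu}{2\sigma^2}\int_0^\theta s\,\gamma_{s/\sigma}\,ds.$$ Then: (i) $M(\theta)\le \exp H(\theta)$ for all $\theta\ge 0$, and for all $t>0$, $$P\Big(\frac{Y-\mu}{\sigma}\ge t\Big)\le \inf_{\theta\ge 0}\exp(-\theta t+H(\theta)).$$ (ii) $M(\theta)\le \exp(\mu\theta^2/\sigma^2)$ for all $\theta\le 0$, and for all $t>0$, $$P\Big(\frac{Y-\mu}{\sigma}\le -t\Big)\le \exp\Big(-\frac{t^2\sigma^2}{4\mu}\Big).$$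
   Context: The Erdős–Rényi random graph on $\{1,\ldots,n\}$ with edge probability $p$: the edge indicators $X_{uv}$, $u\ne v$ (unordered pairs), are independent Bernoulli($p$). A vertex is isolated if it has degree $0$. (The stated formulas for $\mu$ and $\sigma^2$ are the mean and variance of $Y$; $\sigma>0$.) *)

(* Defs.v *)
From Stdlib Require Import Reals Lra List Arith Bool.
Import ListNotations.
Open Scope R_scope.

(* Vertex set {0,...,n-1} (a relabeling of {1,...,n}).
   Unordered pairs {i,j}, i<j, listed as (i,j). *)
Definition edges (n : nat) : list (nat * nat) :=
  flat_map (fun j => map (fun i => (i, j)) (seq 0 j)) (seq 0 n).

(* All 0/1 vectors of length k: a graph is the vector of its edge
   indicators, aligned with [edges n]. *)
Fixpoint bits (k : nat) : list (list bool) :=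
  match k with
  | O => [[]]
  | S k' => map (cons true) (bits k') ++ map (cons false) (bits k')
  end.

Definition weight (p : R) (g : list bool) : R :=
  fold_right (fun (b : bool) (acc : R) => (if b then p else 1 - p) * acc) 1 g.

Definition present_edges (n : nat) (g : list bool) : list (nat * nat) :=
  map fst (filter snd (combine (edges n) g)).

Definition isolated (n : nat) (g : list bool) (v : nat) : bool :=
  forallb (fun e => andb (negb (Nat.eqb (fst e) v)) (negb (Nat.eqb (snd e) v)))
          (present_edges n g).

Definition Ycount (n : nat) (g : list bool) : R :=
  INR (length (filter (isolated n g) (seq 0 n))).

Definition Expect (n : nat) (p : R) (f : list bool -> R) : R :=
  fold_right Rplus 0
    (map (fun g => weight p g * f g) (bits (length (edges n)))).

Definition mu (n : nat) (p : R) : R := INR n * (1 - p) ^ (n - 1).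

Definition sigma2 (n : nat) (p : R) : R :=
  INR n * (1 - p) ^ (n - 1) *
  (1 + INR n * p * (1 - p) ^ (n - 2) - (1 - p) ^ (n - 2)).

Definition sigma (n : nat) (p : R) : R := sqrt (sigma2 n p).

Definition Zstd (n : nat) (p : R) (g : list bool) : R :=
  (Ycount n g - mu n p) / sigma n p.

Definition M (n : nat) (p : R) (theta : R) : R :=
  Expect n p (fun g => exp (theta * Zstd n p g)).

Definition gamma (n : nat) (p : R) (s : R) : R :=
  exp s * (p * exp s + 1 - p) ^ (n - 2) * (INR n * p * exp s + 1 - p)
  + INR (n - 1) * p + 1.

Definition H_integrand (n : nat) (p : R) (s : R) : R :=
  s * gamma n p (s / sigma n p).

Definition H (n : nat) (p theta : R)
  (pr : Riemann_integrable (H_integrand n p) 0 theta) : R :=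
  mu n p / (2 * sigma2 n p) * RiemannInt pr.

(* Main.v *)
Require Import Defs.
From Stdlib Require Import Reals Lra Lia List Arith Bool FunctionalExtensionality.
From Coquelicot Require Import Coquelicot.
Import ListNotations.
Open Scope R_scope.

Definition sumL {A} (l : list A) (f : A -> R) : R :=
  fold_right (fun a acc => f a + acc) 0 l.

Lemma sumL_app {A} (l1 l2 : list A) f : sumL (l1 ++ l2) f = sumL l1 f + sumL l2 f.
Proof. induction l1; simpl; [lra|rewrite IHl1; lra]. Qed.

Lemma sumL_map {A B} (l : list A) (h : A -> B) f : sumL (map h l) f = sumL l (fun a => f (h a)).
Proof. induction l; simpl; auto; rewrite IHl; auto. Qed.

Lemma sumL_ext {A} (l : list A) f g : (forall a, In a l -> f a = g a) -> sumL l f = sumL l g.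
Proof. induction l; simpl; intros H; auto. rewrite H, IHl; auto. Qed.

Lemma sumL_le {A} (l : list A) f g : (forall a, In a l -> f a <= g a) -> sumL l f <= sumL l g.
Proof. induction l; simpl; intros H; [lra|]. pose proof (H a (or_introl eq_refl)).
 pose proof (IHl (fun x h => H x (or_intror h))). lra. Qed.

Lemma sumL_plus {A} (l : list A) f g : sumL l (fun a => f a + g a) = sumL l f + sumL l g.
Proof. induction l; simpl; [lra|rewrite IHl; lra]. Qed.

Lemma sumL_scal {A} (l : list A) c f : sumL l (fun a => c * f a) = c * sumL l f.
Proof. induction l; simpl; [lra|rewrite IHl; lra]. Qed.

Lemma sumL_const0 {A} (l : list A) : sumL l (fun _ => 0) = 0.
Proof. induction l; simpl; [lra|rewrite IHl; lra]. Qed.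

Lemma sumL_swap {A B} (l1 : list A) (l2 : list B) F :
  sumL l1 (fun a => sumL l2 (fun b => F a b)) = sumL l2 (fun b => sumL l1 (fun a => F a b)).
Proof. induction l1; simpl. rewrite sumL_const0; auto.
 rewrite IHl1, <- sumL_plus. auto. Qed.

Lemma INR_len_filter {A} (f : A -> bool) l :
  INR (length (filter f l)) = sumL l (fun a => if f a then 1 else 0).
Proof. induction l; [reflexivity|]. cbn [filter sumL fold_right]. unfold sumL in IHl.
 destruct (f a); cbn [length]; [rewrite S_INR, IHl; lra| rewrite IHl; lra]. Qed.

Definition EB (p : R) (k : nat) (f : list bool -> R) : R :=
  sumL (bits k) (fun g => weight p g * f g).

Lemma Expect_EB n p f : Expect n p f = EB p (length (edges n)) f.
Proof. unfold Expect, EB, sumL. induction (bits (length (edges n))); simpl; auto. rewrite IHl; auto. Qed.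

Lemma EB_0 p f : EB p 0 f = f [].
Proof. unfold EB; simpl. lra. Qed.

Lemma EB_S p k f : EB p (S k) f = p * EB p k (fun g => f (true :: g)) + (1 - p) * EB p k (fun g => f (false :: g)).
Proof. unfold EB; simpl. rewrite sumL_app, !sumL_map. simpl.
 rewrite <- !sumL_scal. f_equal; apply sumL_ext; intros; ring. Qed.

Lemma EB_plus p k f g : EB p k (fun x => f x + g x) = EB p k f + EB p k g.
Proof. revert f g; induction k; intros; rewrite ?EB_0, ?EB_S; auto. rewrite !IHk. ring. Qed.

Lemma EB_scal p k c f : EB p k (fun x => c * f x) = c * EB p k f.
Proof. revert f; induction k; intros; rewrite ?EB_0, ?EB_S; auto. rewrite !IHk. ring. Qed.

Lemma EB_const p k c : EB p k (fun _ => c) = c.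
Proof. induction k; rewrite ?EB_0, ?EB_S; auto. rewrite !IHk. ring. Qed.

Lemma EB_ext p k f g : (forall x, f x = g x) -> EB p k f = EB p k g.
Proof. intros H; unfold EB; apply sumL_ext; intros; rewrite H; auto. Qed.

Lemma EB_le p k f g : 0 <= p <= 1 -> (forall x, f x <= g x) -> EB p k f <= EB p k g.
Proof. intros Hp; revert f g; induction k; intros f g H; rewrite ?EB_0, ?EB_S; auto.
 pose proof (IHk (fun x => f (true::x)) (fun x => g (true::x)) (fun x => H _)).
 pose proof (IHk (fun x => f (false::x)) (fun x => g (false::x)) (fun x => H _)).
 apply Rplus_le_compat; apply Rmult_le_compat_l; lra. Qed.

Lemma EB_minus p k f g : EB p k (fun x => f x - g x) = EB p k f - EB p k g.
Proof. unfold Rminus. rewrite EB_plus. replace (fun x => - g x) with (fun x => (-1) * g x)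
  by (apply functional_extensionality; intros; ring). rewrite EB_scal. ring. Qed.

Lemma EB_sumL {A} p k (l : list A) F : EB p k (fun g => sumL l (fun a => F a g)) = sumL l (fun a => EB p k (F a)).
Proof. induction l; simpl. apply EB_const. rewrite EB_plus, IHl. auto. Qed.

Notation lab := (nat * nat)%type.

Fixpoint allfalse (P : lab -> bool) (L : list lab) (g : list bool) : bool :=
  match L, g with
  | l :: L', b :: g' => negb (P l && b) && allfalse P L' g'
  | _, _ => true
  end.

Fixpoint clearP (P : lab -> bool) (L : list lab) (g : list bool) : list bool :=
  match L, g with
  | l :: L', b :: g' => (if P l then false else b) :: clearP P L' g'
  | _, _ => []
  end.

Fixpoint mergeP (P : lab -> bool) (L : list lab) (g s : list bool) : list bool :=
  match L, g, s with
  | l :: L', b :: g', c :: s' => (if P l then c else b) :: mergeP P L' g' s'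
  | _, _, _ => []
  end.

Definition indb (b : bool) : R := if b then 1 else 0.

Lemma EB_merge p (P : lab -> bool) (L : list lab) F :
  EB p (length L) F = EB p (length L) (fun g => EB p (length L) (fun s => F (mergeP P L g s))).
Proof.
  revert F; induction L as [|l L IH]; intros F.
  - simpl length. rewrite !EB_0. reflexivity.
  - simpl length. rewrite !EB_S.
    rewrite (EB_ext p (length L) (fun g => EB p (S (length L)) (fun s => F (mergeP P (l :: L) (true :: g) s)))
       (fun g => p * EB p (length L) (fun s => F ((if P l then true else true) :: mergeP P L g s))
         + (1-p) * EB p (length L) (fun s => F ((if P l then false else true) :: mergeP P L g s)))).
    2:{ intros; rewrite EB_S; reflexivity. }
    rewrite (EB_ext p (length L) (fun g => EB p (S (length L)) (fun s => F (mergeP P (l :: L) (false :: g) s)))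
       (fun g => p * EB p (length L) (fun s => F ((if P l then true else false) :: mergeP P L g s))
         + (1-p) * EB p (length L) (fun s => F ((if P l then false else false) :: mergeP P L g s)))).
    2:{ intros; rewrite EB_S; reflexivity. }
    rewrite !EB_plus, !EB_scal.
    rewrite (IH (fun g => F (true :: g))), (IH (fun g => F (false :: g))).
    destruct (P l); ring.
Qed.

Lemma EB_clear p (P : lab -> bool) (L : list lab) h :
  EB p (length L) (fun g => indb (allfalse P L g) * h g) =
  (1 - p) ^ (length (filter P L)) * EB p (length L) (fun g => h (clearP P L g)).
Proof.
  revert h; induction L as [|l L IH]; intros h.
  - simpl length. rewrite !EB_0. simpl. unfold indb; simpl. ring.
  - simpl length. rewrite !EB_S. simpl allfalse. simpl clearP. simpl filter.
    destruct (P l); simpl.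
    + rewrite (EB_ext p _ (fun g => 0 * h (true :: g)) (fun _ => 0)) by (intros; ring).
      rewrite EB_const.
      rewrite (IH (fun g => h (false :: g))). ring.
    + rewrite (IH (fun g => h (true :: g))), (IH (fun g => h (false :: g))). ring.
Qed.

Lemma EB_allfalse p (P : lab -> bool) (L : list lab) :
  EB p (length L) (fun g => indb (allfalse P L g)) = (1 - p) ^ (length (filter P L)).
Proof.
  pose proof (EB_clear p P L (fun _ => 1)). cbv beta in H. rewrite EB_const in H.
  rewrite <- (Rmult_1_r ((1-p)^_)), <- H. apply EB_ext; intros; ring.
Qed.

Definition inc (v : nat) (e : lab) : bool := (fst e =? v) || (snd e =? v).

Lemma forallb_present Q L g :
  forallb Q (map fst (filter snd (combine L g))) = allfalse (fun e => negb (Q e)) L g.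
Proof.
  revert g; induction L as [|l L IH]; intros [|b g]; simpl; auto.
  destruct b; simpl; rewrite IH; destruct (Q l); auto.
Qed.

Lemma isolated_eq n g v : isolated n g v = allfalse (inc v) (edges n) g.
Proof.
  unfold isolated, present_edges. rewrite forallb_present. f_equal.
  apply functional_extensionality; intros [a b]; unfold inc; simpl.
  destruct (a =? v), (b =? v); auto.
Qed.

Definition Yc (L : list lab) (n : nat) (g : list bool) : R :=
  sumL (seq 0 n) (fun w => indb (allfalse (inc w) L g)).

Lemma Ycount_eq n g : Ycount n g = Yc (edges n) n g.
Proof.
  unfold Ycount, Yc. rewrite INR_len_filter. apply sumL_ext; intros.
  rewrite isolated_eq; reflexivity.
Qed.

Lemma clear_merge P L g s : length g = length L -> length s = length L ->
  clearP P L (mergeP P L g s) = clearP P L g.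
Proof.
  revert g s; induction L as [|l L IH]; intros [|b g] [|c s]; simpl; intros H1 H2; try lia; auto.
  rewrite IH by lia. destruct (P l); auto.
Qed.

Lemma allfalse_clear_mono Q P L h : allfalse Q L h = true -> allfalse Q L (clearP P L h) = true.
Proof.
  revert h; induction L as [|l L IH]; intros [|b h]; simpl; auto.
  intros H; apply andb_true_iff in H as [H1 H2]. rewrite IH by auto.
  destruct (P l), (Q l), b; simpl in *; auto.
Qed.

Lemma allfalse_merge Q P L g s :
  allfalse Q L (clearP P L g) = true -> allfalse (fun l => P l && Q l) L s = true ->
  allfalse Q L (mergeP P L g s) = true.
Proof.
  revert g s; induction L as [|l L IH]; intros [|b g] [|c s]; simpl; auto.
  intros H1 H2; apply andb_true_iff in H1 as [H1 H1']; apply andb_true_iff in H2 as [H2 H2'].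
  rewrite IH by auto. destruct (P l), (Q l), b, c; simpl in *; auto.
Qed.

Lemma allfalse_extract Q L g : allfalse Q L g = false ->
  exists l, Q l = true /\ forall P, allfalse Q L (clearP P L g) = true -> P l = true.
Proof.
  revert g; induction L as [|l L IH]; intros [|b g]; simpl; try discriminate.
  intros H. destruct (Q l && b) eqn:E.
  - exists l. apply andb_true_iff in E as [E1 E2]. subst b. split; auto.
    intros P. rewrite E1. destruct (P l); simpl; auto.
  - simpl in H. destruct (IH g H) as [l' [H1 H2]]. exists l'; split; auto.
    intros P HP. apply andb_true_iff in HP as [_ HP]. auto.
Qed.

Lemma edges_S n : edges (S n) = edges n ++ map (fun i => (i, n)) (seq 0 n).
Proof. unfold edges. rewrite seq_S, flat_map_app. simpl. rewrite app_nil_r. auto. Qed.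

Lemma edges_lt n e : In e (edges n) -> (fst e < snd e < n)%nat.
Proof.
  unfold edges. intros H. apply in_flat_map in H as [j [Hj He]].
  apply in_map_iff in He as [i [<- Hi]]. apply in_seq in Hj, Hi. simpl. lia.
Qed.

Lemma filter_seq_out v a m : ~ (a <= v < a + m)%nat -> length (filter (fun i => i =? v) (seq a m)) = 0%nat.
Proof.
  revert a; induction m; intros a H; simpl; auto.
  destruct (a =? v) eqn:E. apply Nat.eqb_eq in E; lia. apply IHm; lia.
Qed.

Lemma filter_seq_in v a m : (a <= v < a + m)%nat -> length (filter (fun i => i =? v) (seq a m)) = 1%nat.
Proof.
  revert a; induction m; intros a H; simpl; [lia|].
  destruct (a =? v) eqn:E.
  - apply Nat.eqb_eq in E; subst. simpl. rewrite filter_seq_out; auto; lia.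
  - apply Nat.eqb_neq in E. apply IHm; lia.
Qed.

Lemma filter_map {A B} (f : B -> bool) (h : A -> B) l : filter f (map h l) = map h (filter (fun a => f (h a)) l).
Proof. induction l; simpl; auto. destruct (f (h a)); simpl; rewrite IHl; auto. Qed.

Lemma filter_ext_in' {A} (f g : A -> bool) l : (forall a, In a l -> f a = g a) -> filter f l = filter g l.
Proof. induction l; simpl; intros H; auto. rewrite H by auto. rewrite IHl; auto. Qed.

Lemma filter_false {A} (f : A -> bool) l : (forall a, In a l -> f a = false) -> filter f l = [].
Proof. induction l; simpl; intros H; auto. rewrite H by auto. auto. Qed.

Lemma edges_notinc n : filter (inc n) (edges n) = [].
Proof.
  apply filter_false. intros e He; apply edges_lt in He. unfold inc.
  destruct (fst e =? n) eqn:E1, (snd e =? n) eqn:E2; auto.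
  apply Nat.eqb_eq in E1; lia. apply Nat.eqb_eq in E1; lia. apply Nat.eqb_eq in E2; lia.
Qed.

Lemma count_inc n v : (v < n)%nat -> length (filter (inc v) (edges n)) = (n - 1)%nat.
Proof.
  induction n; intros Hv; [lia|].
  rewrite edges_S, filter_app, length_app, filter_map, length_map.
  destruct (Nat.eq_dec v n) as [E|Hne]; [subst v|].
  - rewrite edges_notinc.
    rewrite (filter_ext_in' _ (fun _ => true)). 2:{ intros; unfold inc; simpl. rewrite Nat.eqb_refl, orb_true_r. auto. }
    rewrite List.filter_true, length_seq. simpl. lia.
  - rewrite IHn by lia.
    rewrite (filter_ext_in' _ (fun i => i =? v)).
    2:{ intros a _; unfold inc; simpl. destruct (n =? v) eqn:E. apply Nat.eqb_eq in E; lia. apply orb_false_r. }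
    rewrite filter_seq_in by lia. simpl; lia.
Qed.

Lemma count_inc2 n v w : (v < n)%nat -> (w < n)%nat -> v <> w ->
  length (filter (fun l => inc v l && inc w l) (edges n)) = 1%nat.
Proof.
  induction n; intros Hv Hw Hvw; [lia|].
  rewrite edges_S, filter_app, length_app, filter_map, length_map.
  destruct (Nat.eq_dec v n) as [E|Hne]; [subst v|].
  - rewrite filter_false. 2:{ intros a Ha. pose proof (edges_notinc n) as H0.
      destruct (inc n a) eqn:E; auto. assert (In a (filter (inc n) (edges n))) by (apply filter_In; auto).
      rewrite H0 in H; destruct H. }
    rewrite (filter_ext_in' _ (fun i => i =? w)).
    2:{ intros a _; unfold inc; simpl. destruct (n =? w) eqn:E; [apply Nat.eqb_eq in E; lia|]. rewrite Nat.eqb_refl, orb_true_r, orb_false_r. auto. }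
    rewrite filter_seq_in by lia. simpl; lia.
  - destruct (Nat.eq_dec w n) as [E|Hne']; [subst w|].
    + rewrite filter_false. 2:{ intros a Ha. pose proof (edges_notinc n) as H0.
      destruct (inc n a) eqn:E; [|apply andb_false_r]. assert (In a (filter (inc n) (edges n))) by (apply filter_In; auto).
      rewrite H0 in H; destruct H. }
      rewrite (filter_ext_in' _ (fun i => i =? v)).
      2:{ intros a _; unfold inc; simpl. destruct (n =? v) eqn:E; [apply Nat.eqb_eq in E; lia|]. rewrite Nat.eqb_refl, orb_true_r, orb_false_r, andb_true_r. auto. }
      rewrite filter_seq_in by lia. simpl; lia.
    + rewrite IHn by lia. rewrite filter_false. simpl; lia.
      intros a _. unfold inc; simpl. destruct (n =? v) eqn:E1. apply Nat.eqb_eq in E1; lia.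
      destruct (n =? w) eqn:E2. apply Nat.eqb_eq in E2; lia.
      destruct (a =? v) eqn:E3, (a =? w) eqn:E4; auto. apply Nat.eqb_eq in E3, E4. lia.
Qed.

Lemma sumL_one {A} (l : list A) : sumL l (fun _ => 1) = INR (length l).
Proof. induction l; [reflexivity|]. cbn [sumL fold_right length]. unfold sumL in IHl. rewrite S_INR, IHl. ring. Qed.

Lemma sumL_seq_if v n A B : (v < n)%nat ->
  sumL (seq 0 n) (fun w => if w =? v then A else B) = A + INR (n - 1) * B.
Proof.
  intros Hv. rewrite (sumL_ext _ _ (fun w => A * (if w =? v then 1 else 0) + B * (1 - (if w =? v then 1 else 0)))).
  2:{ intros; destruct (a =? v); ring. }
  rewrite sumL_plus, !sumL_scal.
  rewrite (sumL_ext _ (fun w => 1 - (if w =? v then 1 else 0)) (fun w => 1 + (-1) * (if w =? v then 1 else 0))) by (intros; ring).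
  rewrite sumL_plus, sumL_scal, <- !INR_len_filter, filter_seq_in by lia.
rewrite sumL_one, length_seq, minus_INR by lia. simpl. ring.
Qed.


Lemma EB_cheb p k F G : 0 <= p <= 1 -> (forall s s', (F s - F s') * (G s - G s') <= 0) ->
  EB p k (fun s => F s * G s) <= EB p k F * EB p k G.
Proof.
  intros Hp H.
  assert (H1 : EB p k (fun s => EB p k (fun s' => (F s - F s') * (G s - G s'))) <= 0).
  { rewrite <- (EB_const p k 0). apply EB_le; auto. intros s.
    rewrite <- (EB_const p k 0). apply EB_le; auto. }
  rewrite (EB_ext p k (fun s => EB p k (fun s' => (F s - F s') * (G s - G s')))
     (fun s => F s * G s + (- F s) * EB p k G + (- G s) * EB p k F + EB p k (fun s' => F s' * G s'))) in H1.
  2:{ intros s. rewrite (EB_ext p k _ (fun s' => F s * G s + (- F s) * G s' + (- G s) * F s' + F s' * G s'))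
        by (intros; ring). rewrite !EB_plus, !EB_scal, EB_const. ring. }
  rewrite !EB_plus, !EB_const in H1.
  rewrite (EB_ext p k (fun s => - F s * EB p k G) (fun s => (- EB p k G) * F s)) in H1 by (intros; ring).
  rewrite (EB_ext p k (fun s => - G s * EB p k F) (fun s => (- EB p k F) * G s)) in H1 by (intros; ring).
  rewrite !EB_scal in H1. lra.
Qed.

Lemma EB_jensen p k u X : 0 <= p <= 1 -> exp (u * EB p k X) <= EB p k (fun s => exp (u * X s)).
Proof.
  intros Hp. set (c := EB p k X).
  apply Rle_trans with (EB p k (fun s => exp (u * c) + (exp (u * c) * u) * (X s - c))).
  - rewrite EB_plus, EB_scal, EB_minus, !EB_const. fold c. lra.
  - apply EB_le; auto. intros s.
    replace (u * X s) with (u * c + u * (X s - c)) by ring. rewrite exp_plus.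
    pose proof (exp_ineq1_le (u * (X s - c))). pose proof (exp_pos (u * c)). nra.
Qed.

Lemma exp_INR_mult N x : exp (INR N * x) = exp x ^ N.
Proof. induction N; simpl pow. rewrite Rmult_0_l, exp_0; auto.
  rewrite S_INR, Rmult_plus_distr_r, Rmult_1_l, exp_plus, IHN. ring. Qed.

Lemma exp_convex_p p u : 0 <= p <= 1 -> exp (p * u) <= p * exp u + (1 - p).
Proof.
  intros Hp.
  pose proof (exp_ineq1_le ((1 - p) * u)). pose proof (exp_ineq1_le (- p * u)).
  assert (E1 : exp u = exp (p * u) * exp ((1 - p) * u)) by (rewrite <- exp_plus; f_equal; ring).
  assert (E2 : 1 = exp (p * u) * exp (- p * u)) by (rewrite <- exp_plus, <- exp_0; f_equal; ring).
  pose proof (exp_pos (p * u)).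
  assert (A1 : p * exp (p*u) * (1 + (1-p)*u) <= p * exp (p*u) * exp ((1 - p) * u)).
  { apply Rmult_le_compat_l; nra. }
  assert (A2 : (1-p) * exp (p*u) * (1 + - p*u) <= (1-p) * exp (p*u) * exp (- p * u)).
  { apply Rmult_le_compat_l; nra. }
  assert (p * exp u + (1 - p) = p * exp (p*u) * exp ((1 - p) * u) + (1-p) * exp (p*u) * exp (- p * u)).
  { rewrite E1. rewrite Rmult_assoc. rewrite (Rmult_assoc (1-p)), <- E2. ring. }
  assert (exp (p*u) = p * exp (p*u) * (1 + (1-p)*u) + (1-p) * exp (p*u) * (1 + - p*u)) by ring.
  lra.
Qed.

Lemma exp_chord d : 0 <= d -> exp d - 1 <= d / 2 * (exp d + 1).
Proof.
  intros Hd. destruct (Req_dec d 0) as [->|Hne]. rewrite exp_0; lra.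
  set (f := fun x => x / 2 * (exp x + 1) - exp x + 1).
  assert (Hd' : forall c, derivable_pt_lim f c (/2 * (exp c + 1) + c / 2 * exp c - exp c)).
  { intros c. apply is_derive_Reals. unfold f. auto_derive; auto. field. }
  destruct (MVT_cor2 f _ 0 d ltac:(lra) (fun c _ => Hd' c)) as [c [Hc1 Hc2]].
  unfold f in Hc1. rewrite exp_0 in Hc1.
  assert (0 <= / 2 * (exp c + 1) + c / 2 * exp c - exp c).
  { pose proof (exp_ineq1_le (- c)). assert (exp c * exp (- c) = 1) by (rewrite <- exp_plus, <- exp_0; f_equal; ring).
    pose proof (exp_pos c). nra. }
  nra.
Qed.

Lemma gamma_lb n p u : (2 <= n)%nat -> 0 <= p <= 1 -> 0 <= u ->
  (1 + INR (n - 1) * p) * (exp u * (p * exp u + 1 - p) ^ (n - 1) + 1) <= gamma n p u.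
Proof.
  intros Hn Hp Hu. unfold gamma.
  destruct n as [|[|j]]; try lia.
  replace (S (S j) - 2)%nat with j by lia. replace (S (S j) - 1)%nat with (S j) by lia.
  rewrite (S_INR (S j)). simpl pow.
  set (N := INR (S j)). set (a := exp u). set (T := (p * a + 1 - p) ^ j).
  assert (HN : 0 <= N) by apply pos_INR.
  assert (Ha : 1 <= a) by (unfold a; pose proof (exp_ineq1_le u); lra).
  assert (HT : 0 <= T) by (unfold T; apply pow_le; nra).
  assert (0 <= a * T * (N * p * (1 - p) * (a - 1))).
  { apply Rmult_le_pos. nra. repeat apply Rmult_le_pos; nra. }
  replace (a * T * ((N + 1) * p * a + 1 - p) + N * p + 1)
    with ((1 + N * p) * (a * ((p * a + 1 - p) * T) + 1) + a * T * (N * p * (1 - p) * (a - 1))) by ring.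
  lra.
Qed.

Lemma EB_le_len p k f g : 0 <= p <= 1 -> (forall x, length x = k -> f x <= g x) -> EB p k f <= EB p k g.
Proof. intros Hp; revert f g; induction k; intros f g H; rewrite ?EB_0, ?EB_S; [apply H; reflexivity|].
 assert (A1 : EB p k (fun x => f (true::x)) <= EB p k (fun x => g (true::x))).
 { apply IHk. intros x Hx. apply H. simpl; lia. }
 assert (A2 : EB p k (fun x => f (false::x)) <= EB p k (fun x => g (false::x))).
 { apply IHk. intros x Hx. apply H. simpl; lia. }
 apply Rplus_le_compat; apply Rmult_le_compat_l; lra. Qed.

Lemma EB_ext_len p k f g : (forall x, length x = k -> f x = g x) -> EB p k f = EB p k g.
Proof. revert f g; induction k; intros f g H; rewrite ?EB_0, ?EB_S; [apply H; reflexivity|].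
 rewrite (IHk (fun x => f (true::x)) (fun x => g (true::x))). 2:{ intros x Hx. apply H. simpl; lia. }
 rewrite (IHk (fun x => f (false::x)) (fun x => g (false::x))). 2:{ intros x Hx. apply H. simpl; lia. }
 auto. Qed.

Lemma EB_nonneg p k f : 0 <= p <= 1 -> (forall x, 0 <= f x) -> 0 <= EB p k f.
Proof. intros. rewrite <- (EB_const p k 0). apply EB_le; auto. Qed.

Lemma sumL_minus {A} (l : list A) f g : sumL l (fun a => f a - g a) = sumL l f - sumL l g.
Proof. induction l; simpl; [lra|rewrite IHl; lra]. Qed.

Lemma Yc_merge_le n v g s : length g = length (edges n) -> length s = length (edges n) ->
  Yc (edges n) n (mergeP (inc v) (edges n) g s) <= Yc (edges n) n (clearP (inc v) (edges n) g).
Proof.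
  intros Hg Hs. unfold Yc. apply sumL_le. intros w _.
  destruct (allfalse (inc w) (edges n) (mergeP (inc v) (edges n) g s)) eqn:E.
  - apply (allfalse_clear_mono _ (inc v)) in E. rewrite clear_merge in E by auto. rewrite E. unfold indb; lra.
  - unfold indb at 1. destruct (allfalse _ _ (clearP _ _ _)); unfold indb; lra.
Qed.

Lemma Yc_merge_ge n v g s : (v < n)%nat ->
  Yc (edges n) n (clearP (inc v) (edges n) g) - Yc (edges n) n (mergeP (inc v) (edges n) g s) <=
  sumL (seq 0 n) (fun w => if w =? v then 1 else indb (negb (allfalse (fun l => inc v l && inc w l) (edges n) s))).
Proof.
  intros Hv. unfold Yc. rewrite <- sumL_minus. apply sumL_le. intros w _.
  destruct (w =? v). { destruct (allfalse _ _ (clearP _ _ _)), (allfalse _ _ (mergeP _ _ _ _)); unfold indb; lra. }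
  destruct (allfalse (inc w) (edges n) (clearP (inc v) (edges n) g)) eqn:E1;
  destruct (allfalse (fun l => inc v l && inc w l) (edges n) s) eqn:E2.
  - rewrite (allfalse_merge _ _ _ _ _ E1 E2). unfold indb; simpl; lra.
  - destruct (allfalse _ _ (mergeP _ _ _ _)); unfold indb; simpl; lra.
  - destruct (allfalse _ _ (mergeP _ _ _ _)); unfold indb; simpl; lra.
  - destruct (allfalse _ _ (mergeP _ _ _ _)); unfold indb; simpl; lra.
Qed.

Lemma EB_star_bound n p v : (v < n)%nat -> 0 <= p <= 1 ->
  EB p (length (edges n)) (fun s => sumL (seq 0 n) (fun w => if w =? v then 1 else
     indb (negb (allfalse (fun l => inc v l && inc w l) (edges n) s)))) = 1 + INR (n - 1) * p.
Proof.
  intros Hv Hp.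
  rewrite (EB_sumL p _ _ (fun w s => if w =? v then 1 else indb (negb (allfalse (fun l => inc v l && inc w l) (edges n) s)))).
  rewrite (sumL_ext _ _ (fun w => if w =? v then 1 else p)). apply sumL_seq_if; auto.
  intros w Hw. apply in_seq in Hw. destruct (w =? v) eqn:E. apply EB_const.
  apply Nat.eqb_neq in E.
  rewrite (EB_ext p _ _ (fun s => 1 - indb (allfalse (fun l => inc v l && inc w l) (edges n) s))).
  2:{ intros s; destruct (allfalse _ _ s); unfold indb; simpl; lra. }
  rewrite EB_minus, EB_const, EB_allfalse, count_inc2 by lia. simpl. ring.
Qed.

Lemma exp_mono x y : x <= y -> exp x <= exp y.
Proof. intros H; destruct H. left; apply exp_increasing; auto. subst; lra. Qed.

Lemma inner_K1 n p v u g : (2 <= n)%nat -> (v < n)%nat -> 0 < p < 1 -> 0 <= u ->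
  length g = length (edges n) ->
  EB p (length (edges n)) (fun s => exp (u * Yc (edges n) n (clearP (inc v) (edges n) g))
        - (1 + u / 2 * gamma n p u) * exp (u * Yc (edges n) n (mergeP (inc v) (edges n) g s))) <= 0.
Proof.
  intros Hn Hv Hp Hu Hg.
  set (L := edges n). set (k := length L).
  set (K := Yc L n (clearP (inc v) L g)).
  set (X := fun s => Yc L n (mergeP (inc v) L g s)).
  assert (Hp' : 0 <= p <= 1) by lra.
  set (m := EB p k (fun s => exp (u * X s))).
  set (EX := EB p k X).
  assert (Hm : 0 <= m) by (apply EB_nonneg; auto; intros; left; apply exp_pos).
  assert (HKX : EB p k (fun s => K - X s) <= 1 + INR (n - 1) * p).
  { rewrite <- (EB_star_bound n p v Hv Hp'). apply EB_le_len; auto.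
    intros s Hs. apply Yc_merge_ge; auto. }
  assert (HKX' : K - EX <= 1 + INR (n - 1) * p).
  { rewrite EB_minus, EB_const in HKX. exact HKX. }
  assert (HJ : exp (u * EX) <= m) by (apply EB_jensen; auto).
  assert (HexpK : exp (u * K) <= exp u * (p * exp u + 1 - p) ^ (n - 1) * m).
  { replace (u * K) with (u * (K - EX) + u * EX) by ring. rewrite exp_plus.
    apply Rle_trans with (exp (u * (1 + INR (n - 1) * p)) * m).
    - apply Rmult_le_compat; try (left; apply exp_pos); auto.
      apply exp_mono. apply Rmult_le_compat_l; lra.
    - apply Rmult_le_compat_r; auto.
      replace (u * (1 + INR (n - 1) * p)) with (u + INR (n - 1) * (p * u)) by ring.
      rewrite exp_plus, exp_INR_mult. apply Rmult_le_compat_l. left; apply exp_pos.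
      apply pow_incr. split. left; apply exp_pos.
      pose proof (exp_convex_p p u Hp'). lra. }
  assert (Hconv : forall s, length s = k ->
     exp (u * K) - exp (u * X s) <= u / 2 * (K - X s) * exp (u * K) + u / 2 * ((K - X s) * exp (u * X s))).
  { intros s Hs. assert (HXK : X s <= K) by (apply Yc_merge_le; auto).
    set (d := u * (K - X s)).
    assert (Hd : 0 <= d) by (unfold d; nra).
    assert (E : exp (u * K) = exp (u * X s) * exp d) by (rewrite <- exp_plus; f_equal; unfold d; ring).
    pose proof (exp_chord d Hd). pose proof (exp_pos (u * X s)).
    rewrite E.
    assert (exp (u * X s) * (exp d - 1) <= exp (u * X s) * (d / 2 * (exp d + 1))) by (apply Rmult_le_compat_l; lra).
    unfold d in *. nra. }
  assert (Hcheb : EB p k (fun s => (K - X s) * exp (u * X s)) <= EB p k (fun s => K - X s) * m).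
  { apply EB_cheb; auto. intros s s'.
    destruct (Rle_dec (X s) (X s')).
    - assert (exp (u * X s) <= exp (u * X s')) by (apply exp_mono; apply Rmult_le_compat_l; lra).
      nra.
    - assert (exp (u * X s') <= exp (u * X s)) by (apply exp_mono; apply Rmult_le_compat_l; lra).
      nra. }
  assert (HG := gamma_lb n p u Hn Hp' Hu).
  assert (Step1 : EB p k (fun s => exp (u * K) - exp (u * X s)) <=
     u / 2 * exp (u * K) * EB p k (fun s => K - X s) + u / 2 * EB p k (fun s => (K - X s) * exp (u * X s))).
  { rewrite <- !EB_scal. rewrite <- EB_plus. apply EB_le_len; auto. intros s Hs.
    specialize (Hconv s Hs). lra. }
  set (E1 := EB p k (fun s => K - X s)) in *.
  rewrite (EB_ext p k _ (fun s => (exp (u * K) - exp (u * X s)) - (u / 2 * gamma n p u) * exp (u * X s)))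
    by (intros; unfold X; ring).
  rewrite EB_minus, EB_scal. fold m.
  set (Nn := INR (n - 1)) in *.
  set (T := exp u * (p * exp u + 1 - p) ^ (n - 1)) in *.
  assert (HeK : 0 <= exp (u * K)) by (left; apply exp_pos).
  assert (A1 : u / 2 * (E1 * (exp (u * K) + m)) <= u / 2 * ((1 + Nn * p) * (exp (u * K) + m))).
  { apply Rmult_le_compat_l. lra. apply Rmult_le_compat_r; lra. }
  assert (A2 : (1 + Nn * p) * (exp (u * K) + m) <= (1 + Nn * p) * (T * m + m)).
  { apply Rmult_le_compat_l. assert (0 <= Nn) by apply pos_INR. nra. lra. }
  assert (A3 : (1 + Nn * p) * (T * m + m) <= gamma n p u * m).
  { replace ((1 + Nn * p) * (T * m + m)) with (((1 + Nn * p) * (T + 1)) * m) by ring.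
    apply Rmult_le_compat_r; auto. }
  assert (A4 : u / 2 * EB p k (fun s => (K - X s) * exp (u * X s)) <= u / 2 * (E1 * m)).
  { apply Rmult_le_compat_l; lra. }
  assert (A5 : u / 2 * ((1 + Nn * p) * (exp (u * K) + m)) <= u / 2 * (gamma n p u * m)).
  { apply Rmult_le_compat_l; lra. }
  nra.
Qed.

Lemma sum_eq_le1 n o : sumL (seq 0 n) (fun v => if v =? o then 1 else 0) <= 1.
Proof.
  rewrite <- (INR_len_filter (fun v => v =? o)).
  destruct (le_lt_dec n o). rewrite filter_seq_out by lia. simpl; lra.
  rewrite filter_seq_in by lia. simpl; lra.
Qed.

Lemma sum_eq_1 n o : (o < n)%nat -> sumL (seq 0 n) (fun v => if v =? o then 1 else 0) = 1.
Proof.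
  intros. rewrite <- (INR_len_filter (fun v => v =? o)). rewrite filter_seq_in by lia. simpl; lra.
Qed.

Lemma indb_le1 b : indb b <= 1.
Proof. destruct b; unfold indb; lra. Qed.
Lemma indb_ge0 b : 0 <= indb b.
Proof. destruct b; unfold indb; lra. Qed.

Lemma clear_sum_bound n g :
  sumL (seq 0 n) (fun v => Yc (edges n) n (clearP (inc v) (edges n) g) - Yc (edges n) n g) <= 2 * INR n.
Proof.
  set (L := edges n).
  apply Rle_trans with (sumL (seq 0 n) (fun v => sumL (seq 0 n) (fun w =>
     if w =? v then 1 else indb (allfalse (inc w) L (clearP (inc v) L g) && negb (allfalse (inc w) L g))))).
  { apply sumL_le; intros v _. unfold Yc. rewrite <- sumL_minus. apply sumL_le; intros w _.
    destruct (w =? v). pose proof (indb_le1 (allfalse (inc w) L (clearP (inc v) L g))).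
    pose proof (indb_ge0 (allfalse (inc w) L g)). lra.
    destruct (allfalse (inc w) L (clearP (inc v) L g)), (allfalse (inc w) L g); unfold indb; simpl; lra. }
  rewrite sumL_swap.
  assert (Esum : sumL (seq 0 n) (fun _ => 2 * 1) = 2 * INR n) by (rewrite sumL_scal, sumL_one, length_seq; ring).
  rewrite <- Esum.
  apply sumL_le. intros w Hw. apply in_seq in Hw.
  apply Rle_trans with (sumL (seq 0 n) (fun v => (if v =? w then 1 else 0) +
     (if v =? w then 0 else indb (allfalse (inc w) L (clearP (inc v) L g) && negb (allfalse (inc w) L g))))).
  { apply sumL_le; intros v _.
    pose proof (indb_ge0 (allfalse (inc w) L (clearP (inc v) L g) && negb (allfalse (inc w) L g))).
    destruct (w =? v) eqn:E1, (v =? w) eqn:E2; try lra;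
    repeat match goal with H : (_ =? _) = true |- _ => apply Nat.eqb_eq in H | H : (_ =? _) = false |- _ => apply Nat.eqb_neq in H end; lia. }
  rewrite sumL_plus, sum_eq_1 by lia.
  destruct (allfalse (inc w) L g) eqn:Ew.
  - rewrite (sumL_ext _ _ (fun _ => 0)). rewrite sumL_const0; lra.
    intros v _. rewrite andb_false_r. destruct (v =? w); unfold indb; auto.
  - destruct (allfalse_extract _ _ _ Ew) as [[x y] [Hl Hall]].
    set (o := if x =? w then y else x).
    apply Rle_trans with (1 + sumL (seq 0 n) (fun v => if v =? o then 1 else 0)).
    2:{ pose proof (sum_eq_le1 n o). lra. }
    apply Rplus_le_compat_l. apply sumL_le; intros v _.
    destruct (v =? w) eqn:Evw. destruct (v =? o); lra.
    rewrite andb_true_r.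
    destruct (allfalse (inc w) L (clearP (inc v) L g)) eqn:Ec; [|destruct (v =? o); unfold indb; simpl; lra].
    specialize (Hall (inc v) Ec). unfold inc in Hall, Hl; simpl in Hall, Hl.
    apply Nat.eqb_neq in Evw.
    assert (v = o).
    { unfold o. destruct (x =? w) eqn:Exw, (x =? v) eqn:Exv, (y =? v) eqn:Eyv; simpl in *; try discriminate;
      repeat match goal with H : (_ =? _) = true |- _ => apply Nat.eqb_eq in H | H : (_ =? _) = false |- _ => apply Nat.eqb_neq in H end;
      try lia. }
    subst o. rewrite <- H, Nat.eqb_refl. unfold indb; simpl; lra.
Qed.

Lemma Yc_indb_sum L n g (c : R) : Yc L n g * c = sumL (seq 0 n) (fun v => indb (allfalse (inc v) L g) * c).
Proof. unfold Yc. induction (seq 0 n); simpl; [ring|]. rewrite <- IHl. ring. Qed.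

Lemma per_vertex n p v h : (v < n)%nat ->
  EB p (length (edges n)) (fun g => indb (allfalse (inc v) (edges n) g) * h g) =
  (1 - p) ^ (n - 1) * EB p (length (edges n)) (fun g => h (clearP (inc v) (edges n) g)).
Proof. intros Hv. rewrite EB_clear, count_inc by auto. auto. Qed.

Lemma K1 n p u : (2 <= n)%nat -> 0 < p < 1 -> 0 <= u ->
  EB p (length (edges n)) (fun g => Yc (edges n) n g * exp (u * Yc (edges n) n g)) <=
  mu n p * (1 + u / 2 * gamma n p u) * EB p (length (edges n)) (fun g => exp (u * Yc (edges n) n g)).
Proof.
  intros Hn Hp Hu. set (L := edges n). set (k := length L).
  assert (Hp' : 0 <= p <= 1) by lra.
  set (m := EB p k (fun g => exp (u * Yc L n g))).
  rewrite (EB_ext p k _ (fun g => sumL (seq 0 n) (fun v => indb (allfalse (inc v) L g) * exp (u * Yc L n g))))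
    by (intros; apply Yc_indb_sum).
  rewrite EB_sumL.
  apply Rle_trans with (sumL (seq 0 n) (fun v => (1 - p) ^ (n - 1) * ((1 + u / 2 * gamma n p u) * m))).
  2:{ rewrite (sumL_ext _ _ (fun v => ((1 - p) ^ (n - 1) * ((1 + u / 2 * gamma n p u) * m)) * 1)) by (intros; ring).
      rewrite sumL_scal, sumL_one, length_seq. unfold mu. lra. }
  apply sumL_le. intros v Hv. apply in_seq in Hv.
  unfold k, L. rewrite per_vertex by lia. fold L k.
  apply Rmult_le_compat_l. apply pow_le; lra.
  set (F := fun h => exp (u * Yc L n (clearP (inc v) L h)) - (1 + u / 2 * gamma n p u) * exp (u * Yc L n h)).
  assert (HF : EB p k F <= 0).
  { unfold k. rewrite (EB_merge p (inc v) L F). apply Rle_trans with (EB p (length L) (fun _ => 0)).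
    2: rewrite EB_const; lra.
    apply EB_le_len; auto. intros g Hg.
    rewrite (EB_ext_len p _ _ (fun s => exp (u * Yc L n (clearP (inc v) L g)) -
        (1 + u / 2 * gamma n p u) * exp (u * Yc L n (mergeP (inc v) L g s)))).
    apply inner_K1; auto; lia.
    intros s Hs. unfold F. rewrite clear_merge by auto. reflexivity. }
  unfold F in HF. rewrite EB_minus, EB_scal in HF. fold m in HF. lra.
Qed.

Lemma K2 n p u : (2 <= n)%nat -> 0 < p < 1 -> u <= 0 ->
  mu n p * (1 + 2 * u) * EB p (length (edges n)) (fun g => exp (u * Yc (edges n) n g)) <=
  EB p (length (edges n)) (fun g => Yc (edges n) n g * exp (u * Yc (edges n) n g)).
Proof.
  intros Hn Hp Hu. set (L := edges n). set (k := length L).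
  assert (Hp' : 0 <= p <= 1) by lra.
  set (m := EB p k (fun g => exp (u * Yc L n g))).
  rewrite (EB_ext p k _ (fun g => sumL (seq 0 n) (fun v => indb (allfalse (inc v) L g) * exp (u * Yc L n g))))
    by (intros; apply Yc_indb_sum).
  rewrite EB_sumL.
  rewrite (sumL_ext _ _ (fun v => (1 - p) ^ (n - 1) * EB p k (fun g => exp (u * Yc L n (clearP (inc v) L g))))).
  2:{ intros v Hv; apply in_seq in Hv. unfold k, L. rewrite per_vertex by lia. reflexivity. }
  rewrite sumL_scal.
  apply Rle_trans with ((1 - p) ^ (n - 1) * sumL (seq 0 n) (fun v =>
      EB p k (fun g => exp (u * Yc L n g) * (1 + u * (Yc L n (clearP (inc v) L g) - Yc L n g))))).
  2:{ apply Rmult_le_compat_l. apply pow_le; lra. apply sumL_le; intros v _. apply EB_le; auto. intros g.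
      replace (u * Yc L n (clearP (inc v) L g)) with (u * Yc L n g + u * (Yc L n (clearP (inc v) L g) - Yc L n g)) by ring.
      rewrite exp_plus. apply Rmult_le_compat_l. left; apply exp_pos. apply exp_ineq1_le. }
  rewrite <- EB_sumL.
  rewrite (EB_ext p k _ (fun g => exp (u * Yc L n g) * (INR n + u * sumL (seq 0 n) (fun v => Yc L n (clearP (inc v) L g) - Yc L n g)))).
  2:{ intros g. rewrite (sumL_ext _ _ (fun v => exp (u * Yc L n g) * 1 + (exp (u * Yc L n g) * u) * (Yc L n (clearP (inc v) L g) - Yc L n g)))
        by (intros; ring).
      rewrite sumL_plus, !sumL_scal. rewrite sumL_one, length_seq. ring. }
  apply Rle_trans with ((1 - p) ^ (n - 1) * EB p k (fun g => exp (u * Yc L n g) * (INR n + u * (2 * INR n)))).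
  - rewrite (EB_ext p k _ (fun g => (INR n * (1 + 2 * u)) * exp (u * Yc L n g))) by (intros; ring).
    rewrite EB_scal. fold m. unfold mu. lra.
  - apply Rmult_le_compat_l. apply pow_le; lra. apply EB_le; auto. intros g.
    apply Rmult_le_compat_l. left; apply exp_pos.
    pose proof (clear_sum_bound n g). fold L in H. nra.
Qed.


Lemma EB_pos p k f : 0 < p < 1 -> (forall x, 0 < f x) -> 0 < EB p k f.
Proof. intros Hp; revert f; induction k; intros f H; rewrite ?EB_0, ?EB_S; auto.
  pose proof (IHk (fun x => f (true :: x)) (fun x => H _)).
  pose proof (IHk (fun x => f (false :: x)) (fun x => H _)). nra. Qed.

Lemma EB_derive p k (z : list bool -> R) th :
  is_derive (fun t => EB p k (fun g => exp (t * z g))) th (EB p k (fun g => z g * exp (th * z g))).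
Proof.
  revert z; induction k; intros z.
  - apply (is_derive_ext (fun t => exp (t * z []))). intros; rewrite EB_0; auto.
    rewrite EB_0. auto_derive; auto. ring.
  - apply (is_derive_ext (fun t => p * EB p k (fun g => exp (t * z (true :: g))) + (1 - p) * EB p k (fun g => exp (t * z (false :: g))))).
    intros; rewrite EB_S; auto.
    rewrite EB_S. apply (is_derive_plus (fun t => p * EB p k (fun g => exp (t * z (true :: g))))
      (fun t => (1 - p) * EB p k (fun g => exp (t * z (false :: g))))).
    + apply is_derive_scal. apply (IHk (fun g => z (true :: g))).
    + apply is_derive_scal. apply (IHk (fun g => z (false :: g))).
Qed.

Lemma sigma2_pos n p : (2 <= n)%nat -> 0 < p < 1 -> 0 < sigma2 n p.
Proof.
  intros Hn Hp. unfold sigma2.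
  assert (0 < INR n) by (apply lt_0_INR; lia).
  assert (0 < (1 - p) ^ (n - 1)) by (apply pow_lt; lra).
  assert (0 < (1 - p) ^ (n - 2)) by (apply pow_lt; lra).
  assert ((1 - p) ^ (n - 2) <= 1) by (apply Rle_trans with (1 ^ (n - 2)); [apply pow_incr; split; lra| rewrite pow1; lra]).
  assert (0 < INR n * p * (1 - p) ^ (n - 2)) by (repeat apply Rmult_lt_0_compat; lra).
  apply Rmult_lt_0_compat; [nra|lra].
Qed.

Lemma mu_pos n p : (2 <= n)%nat -> 0 < p < 1 -> 0 < mu n p.
Proof. intros Hn Hp. unfold mu. apply Rmult_lt_0_compat. apply lt_0_INR; lia. apply pow_lt; lra. Qed.



Lemma s_pos (n : nat) (p : R) (Hn : (2 <= n)%nat) (Hp : 0 < p < 1) : 0 < (Defs.sigma n p).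
Proof. unfold Defs.sigma. apply sqrt_lt_R0. apply sigma2_pos; auto. Qed.

Lemma s_sq (n : nat) (p : R) (Hn : (2 <= n)%nat) (Hp : 0 < p < 1) : (Defs.sigma n p) * (Defs.sigma n p) = sigma2 n p.
Proof. unfold Defs.sigma. apply sqrt_sqrt. left; apply sigma2_pos; auto. Qed.

Lemma Z_eq (n : nat) (p : R) g : (Zstd n p) g = ((Yc (edges n) n) g - mu n p) / (Defs.sigma n p).
Proof. unfold Zstd. rewrite Ycount_eq. auto. Qed.

Lemma expZ (n : nat) (p : R) (Hn : (2 <= n)%nat) (Hp : 0 < p < 1) th g : exp (th * (Zstd n p) g) = exp (- (th * mu n p / (Defs.sigma n p))) * exp (th / (Defs.sigma n p) * (Yc (edges n) n) g).
Proof. rewrite <- exp_plus, Z_eq. f_equal. pose proof (s_pos n p Hn Hp). field. lra. Qed.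

Lemma M_eq (n : nat) (p : R) (Hn : (2 <= n)%nat) (Hp : 0 < p < 1) th : M n p th = exp (- (th * mu n p / (Defs.sigma n p))) * EB p (length (edges n)) (fun g => exp (th / (Defs.sigma n p) * (Yc (edges n) n) g)).
Proof. unfold M. rewrite Expect_EB. rewrite <- EB_scal. apply EB_ext; intros; apply (expZ n p Hn Hp). Qed.

Lemma dM_eq (n : nat) (p : R) (Hn : (2 <= n)%nat) (Hp : 0 < p < 1) th : EB p (length (edges n)) (fun g => (Zstd n p) g * exp (th * (Zstd n p) g)) =
  exp (- (th * mu n p / (Defs.sigma n p))) / (Defs.sigma n p) * (EB p (length (edges n)) (fun g => (Yc (edges n) n) g * exp (th / (Defs.sigma n p) * (Yc (edges n) n) g)) - mu n p * EB p (length (edges n)) (fun g => exp (th / (Defs.sigma n p) * (Yc (edges n) n) g))).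
Proof.
  rewrite (EB_ext p (length (edges n)) _ (fun g => (exp (- (th * mu n p / (Defs.sigma n p))) / (Defs.sigma n p)) * ((Yc (edges n) n) g * exp (th / (Defs.sigma n p) * (Yc (edges n) n) g))
      + (- (exp (- (th * mu n p / (Defs.sigma n p))) / (Defs.sigma n p)) * mu n p) * exp (th / (Defs.sigma n p) * (Yc (edges n) n) g))).
  rewrite EB_plus, !EB_scal. ring.
  intros g. rewrite (expZ n p Hn Hp), Z_eq. pose proof (s_pos n p Hn Hp). field. lra.
Qed.

Lemma M_pos (n : nat) (p : R) (Hp : 0 < p < 1) th : 0 < M n p th.
Proof. unfold M. rewrite Expect_EB. apply EB_pos; auto. intros; apply exp_pos. Qed.

Lemma M_0 (n : nat) (p : R) : M n p 0 = 1.
Proof. unfold M. rewrite Expect_EB. rewrite (EB_ext _ _ _ (fun _ => 1)). apply EB_const. intros; rewrite Rmult_0_l, exp_0; auto. Qed.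

Lemma M_derive (n : nat) (p : R) th : is_derive (M n p) th (EB p (length (edges n)) (fun g => (Zstd n p) g * exp (th * (Zstd n p) g))).
Proof.
  apply (is_derive_ext (fun t => EB p (length (edges n)) (fun g => exp (t * (Zstd n p) g)))).
  intros; unfold M; rewrite Expect_EB; auto.
  apply EB_derive.
Qed.

Lemma dM_le (n : nat) (p : R) (Hn : (2 <= n)%nat) (Hp : 0 < p < 1) th : 0 <= th ->
  EB p (length (edges n)) (fun g => (Zstd n p) g * exp (th * (Zstd n p) g)) <= mu n p / (2 * sigma2 n p) * H_integrand n p th * M n p th.
Proof.
  intros Hth. rewrite (dM_eq n p Hn Hp), (M_eq n p Hn Hp). pose proof (s_pos n p Hn Hp) as Hs.
  assert (Hu : 0 <= th / (Defs.sigma n p)) by (apply Rdiv_le_0_compat; lra).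
  pose proof (K1 n p (th / (Defs.sigma n p)) Hn Hp Hu).
  set (A := exp (- (th * mu n p / (Defs.sigma n p)))). assert (HA : 0 < A) by apply exp_pos.
  set (m := EB p (length (edges n)) (fun g => exp (th / (Defs.sigma n p) * (Yc (edges n) n) g))) in *.
  set (E := EB p (length (edges n)) (fun g => (Yc (edges n) n) g * exp (th / (Defs.sigma n p) * (Yc (edges n) n) g))) in *.
  unfold H_integrand. rewrite <- (s_sq n p Hn Hp).
  assert (A / (Defs.sigma n p) * (E - mu n p * m) <= A / (Defs.sigma n p) * (mu n p * (th / (Defs.sigma n p)) / 2 * gamma n p (th / (Defs.sigma n p)) * m)).
  { apply Rmult_le_compat_l. apply Rdiv_le_0_compat; lra. lra. }
  replace (mu n p / (2 * ((Defs.sigma n p) * (Defs.sigma n p))) * (th * gamma n p (th / (Defs.sigma n p))) * (A * m))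
    with (A / (Defs.sigma n p) * (mu n p * (th / (Defs.sigma n p)) / 2 * gamma n p (th / (Defs.sigma n p)) * m)) by (field; lra).
  lra.
Qed.

Lemma dM_ge (n : nat) (p : R) (Hn : (2 <= n)%nat) (Hp : 0 < p < 1) th : th <= 0 ->
  2 * mu n p * th / sigma2 n p * M n p th <= EB p (length (edges n)) (fun g => (Zstd n p) g * exp (th * (Zstd n p) g)).
Proof.
  intros Hth. rewrite (dM_eq n p Hn Hp), (M_eq n p Hn Hp). pose proof (s_pos n p Hn Hp) as Hs.
  assert (Hu : th / (Defs.sigma n p) <= 0) by (apply Rmult_le_0_r; [lra| left; apply Rinv_0_lt_compat; lra]).
  pose proof (K2 n p (th / (Defs.sigma n p)) Hn Hp Hu).
  set (A := exp (- (th * mu n p / (Defs.sigma n p)))). assert (HA : 0 < A) by apply exp_pos.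
  set (m := EB p (length (edges n)) (fun g => exp (th / (Defs.sigma n p) * (Yc (edges n) n) g))) in *.
  set (E := EB p (length (edges n)) (fun g => (Yc (edges n) n) g * exp (th / (Defs.sigma n p) * (Yc (edges n) n) g))) in *.
  rewrite <- (s_sq n p Hn Hp).
  assert (A / (Defs.sigma n p) * (mu n p * (2 * (th / (Defs.sigma n p))) * m) <= A / (Defs.sigma n p) * (E - mu n p * m)).
  { apply Rmult_le_compat_l. apply Rdiv_le_0_compat; lra. lra. }
  replace (2 * mu n p * th / ((Defs.sigma n p) * (Defs.sigma n p)) * (A * m)) with (A / (Defs.sigma n p) * (mu n p * (2 * (th / (Defs.sigma n p))) * m)) by (field; lra).
  lra.
Qed.




Lemma mono_deriv g g' b a : b <= a -> (forall x, b <= x <= a -> is_derive g x (g' x)) ->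
  (forall x, b <= x <= a -> 0 <= g' x) -> g b <= g a.
Proof.
  intros Hba Hd Hpos. destruct (Req_dec b a) as [->|Hne]. lra.
  destruct (MVT_cor2 g g' b a ltac:(lra)) as [c [Hc1 Hc2]].
  intros c Hc. apply is_derive_Reals. apply Hd; auto.
  assert (0 <= g' c) by (apply Hpos; lra). nra.
Qed.

Lemma H_cont n p x : continuous (H_integrand n p) x.
Proof.
  apply (@ex_derive_continuous R_AbsRing R_NormedModule). unfold H_integrand, gamma. auto_derive. auto.
Qed.

Lemma RInt_derive n p x : is_derive (RInt (H_integrand n p) 0) x (H_integrand n p x).
Proof.
  apply (is_derive_RInt (H_integrand n p) (RInt (H_integrand n p) 0) 0 x). apply filter_forall. intros b.
  exact (@RInt_correct R_CompleteNormedModule _ _ _ (@ex_RInt_continuous R_CompleteNormedModule _ _ _ (fun z _ => H_cont n p z))).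
  apply H_cont.
Qed.

Lemma lnM_derive n p x : 0 < p < 1 ->
  is_derive (fun t => ln (M n p t)) x
    (EB p (length (edges n)) (fun g => Zstd n p g * exp (x * Zstd n p g)) / M n p x).
Proof.
  intros Hp.
  pose proof (M_pos n p Hp x).
  assert (H1 := is_derive_comp ln (M n p) x _ _ (proj2 (is_derive_Reals ln (M n p x) _) (derivable_pt_lim_ln _ H)) (M_derive n p x)).
  eapply is_derive_ext; [|exact H1]. intros; reflexivity.
Qed.

Theorem theorem1p1 (n : nat) (p : R) (hn : (2 <= n)%nat) (hp0 : 0 < p) (hp1 : p < 1) :
  (forall theta (htheta : 0 <= theta)
          (pr : Riemann_integrable (H_integrand n p) 0 theta),
      M n p theta <= exp (H n p theta pr))
  /\
  (forall t, 0 < t ->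
     forall theta (htheta : 0 <= theta)
            (pr : Riemann_integrable (H_integrand n p) 0 theta),
       Expect n p (fun g => if Rle_dec t (Zstd n p g) then 1 else 0)
       <= exp (- theta * t + H n p theta pr))
  /\
  (forall theta, theta <= 0 ->
      M n p theta <= exp (mu n p * theta ^ 2 / sigma2 n p))
  /\
  (forall t, 0 < t ->
       Expect n p (fun g => if Rle_dec (Zstd n p g) (- t) then 1 else 0)
       <= exp (- (t ^ 2 * sigma2 n p) / (4 * mu n p))).
Proof.
  assert (Hp : 0 < p < 1) by lra.
  pose proof (sigma2_pos n p hn Hp) as Hs2.
  pose proof (mu_pos n p hn Hp) as Hmu.
  set (C := mu n p / (2 * sigma2 n p)).
  set (h := H_integrand n p).
  set (D := fun x => EB p (length (edges n)) (fun g => Zstd n p g * exp (x * Zstd n p g))).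
  assert (Hi : forall theta, 0 <= theta -> ln (M n p theta) <= C * RInt h 0 theta).
  { intros th Hth.
    assert (G := mono_deriv (fun x => C * RInt h 0 x - ln (M n p x)) (fun x => C * h x - D x / M n p x) 0 th Hth).
    cbv beta in G. rewrite RInt_point, M_0, ln_1 in G. unfold zero in G; simpl in G.
    enough (0 <= C * RInt h 0 th - ln (M n p th)) by lra.
    replace 0 with (C * 0 - 0) at 1 by ring. apply G.
    - intros x _. apply (is_derive_minus (fun x => C * RInt h 0 x) (fun x => ln (M n p x))).
      apply is_derive_scal. apply RInt_derive. apply lnM_derive; auto.
    - intros x Hx. pose proof (dM_le n p hn Hp x ltac:(lra)). pose proof (M_pos n p Hp x).

      assert (D x / M n p x <= C * h x).
      { apply Rmult_le_reg_r with (M n p x); auto. unfold Rdiv. rewrite Rmult_assoc, Rinv_l by lra. unfold D, C, h in *. lra. }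
      lra. }
  assert (HiM : forall theta (htheta : 0 <= theta) (pr : Riemann_integrable (H_integrand n p) 0 theta),
      M n p theta <= exp (H n p theta pr)).
  { intros th Hth pr. unfold H. rewrite <- RInt_Reals. fold C h.
    rewrite <- (exp_ln (M n p th)) by (apply M_pos; auto). apply exp_mono. apply Hi; auto. }
  assert (HiiM : forall theta, theta <= 0 -> M n p theta <= exp (mu n p * theta ^ 2 / sigma2 n p)).
  { intros th Hth.
    assert (G := mono_deriv (fun x => ln (M n p x) - mu n p * x ^ 2 / sigma2 n p)
        (fun x => D x / M n p x - mu n p * (2 * x) / sigma2 n p) th 0 Hth).
    cbv beta in G. rewrite M_0, ln_1 in G.
    rewrite <- (exp_ln (M n p th)) by (apply M_pos; auto). apply exp_mono.
    enough (ln (M n p th) - mu n p * th ^ 2 / sigma2 n p <= 0) by lra.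
    replace 0 with (0 - mu n p * 0 ^ 2 / sigma2 n p) by (field; lra). apply G.
    - intros x _. apply (is_derive_minus (fun x => ln (M n p x)) (fun x => mu n p * x ^ 2 / sigma2 n p)).
      apply lnM_derive; auto. auto_derive; auto. field; lra.
    - intros x Hx. pose proof (dM_ge n p hn Hp x ltac:(lra)). pose proof (M_pos n p Hp x).

      assert (2 * mu n p * x / sigma2 n p <= D x / M n p x).
      { apply Rmult_le_reg_r with (M n p x); auto. replace (D x / M n p x * M n p x) with (D x) by (field; lra). unfold D in *. lra. }
      assert (mu n p * (2 * x) / sigma2 n p = 2 * mu n p * x / sigma2 n p) by (field; lra).
      lra. }
  split; [exact HiM|]. split.
  { intros t Ht th Hth pr.
    apply Rle_trans with (exp (- th * t) * M n p th).
    - unfold M. rewrite !Expect_EB, <- EB_scal. apply EB_le; [lra|]. intros g.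
      rewrite <- exp_plus. destruct (Rle_dec t (Zstd n p g)).
      + pose proof (exp_ineq1_le (- th * t + th * Zstd n p g)). nra.
      + left; apply exp_pos.
    - rewrite exp_plus. apply Rmult_le_compat_l. left; apply exp_pos. apply HiM; auto. }
  split; [exact HiiM|].
  intros t Ht.
  set (th := - (t * sigma2 n p) / (2 * mu n p)).
  assert (Hth : th <= 0).
  { assert (0 < t * sigma2 n p / (2 * mu n p)) by (apply Rdiv_lt_0_compat; nra).
    unfold th. replace (- (t * sigma2 n p) / (2 * mu n p)) with (- (t * sigma2 n p / (2 * mu n p))) by (field; lra). lra. }
  apply Rle_trans with (exp (th * t) * M n p th).
  - unfold M. rewrite !Expect_EB, <- EB_scal. apply EB_le; [lra|]. intros g.
    rewrite <- exp_plus. destruct (Rle_dec (Zstd n p g) (- t)).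
    + pose proof (exp_ineq1_le (th * t + th * Zstd n p g)). nra.
    + left; apply exp_pos.
  - apply Rle_trans with (exp (th * t) * exp (mu n p * th ^ 2 / sigma2 n p)).
    apply Rmult_le_compat_l. left; apply exp_pos. apply HiiM; auto.
    rewrite <- exp_plus. right. f_equal. unfold th. field. lra.
Qed.
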